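(* The compact subsets of the Sorgenfrey line $\mathbb R_\ell$ are exactly the well-founded subdcpos of $(\mathbb R,\ge)$. They are all countable.
   Context: The Sorgenfrey line $\mathbb R_\ell$ is $\mathbb R$ with the topology generated by the half-open intervals $[a,b[$, $a<b$. A subset $Q\subseteq\mathbb R$ is a chain in $(\mathbb R,\ge)$ automatically; it is a subdcpo of $(\mathbb R,\ge)$ if for every non-empty subset $D\subseteq Q$, the supremum of $D$ in $(\mathbb R,\ge)$ (i.e. $\inf D$ in the usual order) exists in $\mathbb R$ and belongs to $Q$. It is well-founded in $(\mathbb R,\ge)$ if it contains no infinite strictly increasing sequence $r_0<r_1<\cdots$ (in the usual order). *)

(* Defs.v *)
From Stdlib Require Import Reals List.
Open Scope R_scope.

Definition sorgenfrey_open (U : R -> Prop) : Prop :=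
  forall x, U x -> exists b, x < b /\ forall y, x <= y < b -> U y.

Definition sorgenfrey_compact (Q : R -> Prop) : Prop :=
  forall (I : Type) (U : I -> R -> Prop),
    (forall i, sorgenfrey_open (U i)) ->
    (forall x, Q x -> exists i, U i x) ->
    exists l : list I, forall x, Q x -> exists i, In i l /\ U i x.

(* m is the infimum (usual order) of D, i.e. the supremum of D in (R, >=). *)
Definition is_inf (D : R -> Prop) (m : R) : Prop :=
  (forall d, D d -> m <= d) /\ (forall m', (forall d, D d -> m' <= d) -> m' <= m).

(* Q is a subdcpo of (R, >=): every non-empty D ⊆ Q (all such D are directed,
   Q being a chain) has a supremum in (R,>=) (= inf D) which lies in Q. *)
Definition subdcpo_ge (Q : R -> Prop) : Prop :=
  forall D : R -> Prop,
    (forall x, D x -> Q x) -> (exists x, D x) ->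
    exists m, is_inf D m /\ Q m.

Definition well_founded_ge (Q : R -> Prop) : Prop :=
  ~ exists r : nat -> R, (forall n, Q (r n)) /\ (forall n, r n < r (S n)).

Definition countable_set (Q : R -> Prop) : Prop :=
  exists f : R -> nat, forall x y, Q x -> Q y -> f x = f y -> x = y.

(* Main.v *)
Require Import Defs.
From Stdlib Require Import Reals.
From Stdlib Require Import Lra Lia List Classical ClassicalEpsilon ZArith Cantor.
Open Scope R_scope.

Lemma le_fold_max (l : list nat) i : In i l -> (i <= fold_right max 0 l)%nat.
Proof. induction l; simpl; [tauto|]. intros [->|H]; [lia|]. specialize (IHl H); lia. Qed.

Lemma cover_mono Q (U : nat -> R -> Prop) :
  sorgenfrey_compact Q -> (forall n, sorgenfrey_open (U n)) ->
  (forall n m y, (n <= m)%nat -> U n y -> U m y) ->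
  (forall x, Q x -> exists n, U n x) -> exists N, forall x, Q x -> U N x.
Proof.
  intros HC Ho Hm Hc. destruct (HC nat U Ho Hc) as [l Hl].
  exists (fold_right max 0%nat l). intros x Qx. destruct (Hl x Qx) as [i [Hi Ui]].
  eapply Hm; [apply le_fold_max; exact Hi| exact Ui].
Qed.

Lemma wf_max Q B : well_founded_ge Q -> (forall x, B x -> Q x) -> (exists x, B x) ->
  exists b, B b /\ forall y, B y -> y <= b.
Proof.
  intros Hwf HBQ [b0 Hb0].
  destruct (classic (exists b, B b /\ forall y, B y -> y <= b)) as [H|H]; [exact H|].
  exfalso. apply Hwf.
  assert (Hn : forall x, B x -> exists y, B y /\ x < y).
  { intros x Bx. apply NNPP; intro Hx. apply H. exists x. split; auto.
    intros y By. destruct (Rle_dec y x) as [|Hy]; auto. exfalso. apply Hx.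
    exists y. split; auto. lra. }
  set (g := fun x => epsilon (inhabits 0) (fun y => B y /\ x < y)).
  assert (Hg : forall x, B x -> B (g x) /\ x < g x).
  { intros x Bx. unfold g. apply epsilon_spec. apply Hn; auto. }
  set (r := fun n => Nat.iter n g b0).
  assert (Hr : forall n, B (r n)).
  { induction n; simpl; auto. apply (Hg _ IHn). }
  exists r. split; [intro n; apply HBQ, Hr|]. intro n. apply (Hg _ (Hr n)).
Qed.

Lemma bounded_below Q : sorgenfrey_compact Q -> exists N, forall x, Q x -> N < x.
Proof.
  intros HC.
  destruct (cover_mono Q (fun n y => - INR n < y) HC) as [N HN].
  - intros n y Hy. exists (y+1). split; [lra|]. intros z Hz; lra.
  - intros n m y Hnm Hy. apply le_INR in Hnm. lra.
  - intros x _. destruct (INR_unbounded (-x)) as [n Hn]. exists n. lra.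
  - exists (- INR N). exact HN.
Qed.

Lemma compact_subdcpo Q : sorgenfrey_compact Q -> subdcpo_ge Q.
Proof.
  intros HC D HDQ [d0 Hd0].
  destruct (bounded_below Q HC) as [N HN].
  destruct (completeness (fun x => D (-x))) as [l [Hub Hlub]].
  - exists (-N). intros x Hx. specialize (HN _ (HDQ _ Hx)). unfold Rle. left; lra.
  - exists (-d0). rewrite Ropp_involutive. exact Hd0.
  - assert (Hinf : is_inf D (-l)).
    { split.
      - intros d Hd. assert (H := Hub (-d)). cbv beta in H. rewrite Ropp_involutive in H.
        specialize (H Hd). lra.
      - intros m' Hm'. assert (l <= - m'); [|lra]. apply Hlub. intros x Hx.
        specialize (Hm' _ Hx). lra. }
    exists (-l). split; auto.
    set (m := -l) in *. apply NNPP. intro Hm.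
    destruct (cover_mono Q (fun n y => y < m \/ m + / INR (S n) <= y) HC) as [K HK].
    + intros n y [Hy|Hy].
      * exists m. split; auto. intros z Hz; left; lra.
      * exists (y+1). split; [lra|]. intros z Hz; right; lra.
    + intros n k y Hnk [Hy|Hy]; [left; auto|right].
      assert (/ INR (S k) <= / INR (S n)); [|lra].
      apply Rinv_le_contravar. apply lt_0_INR; lia. apply le_INR; lia.
    + intros x Qx. destruct (Rlt_dec x m) as [Hx|Hx]. exists 0%nat; left; auto.
      assert (m < x). { destruct (Req_dec x m). subst. contradiction. lra. }
      destruct (archimed_cor1 (x - m)) as [K [HK1 HK2]]; [lra|].
      exists (K - 1)%nat. right. replace (S (K - 1)) with K by lia. lra.
    + assert (Hpos : 0 < / INR (S K)). { apply Rinv_0_lt_compat, lt_0_INR; lia. }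
      assert (m + / INR (S K) <= m); [|lra].
      destruct Hinf as [Hlb Hg]. apply Hg. intros d Hd.
      destruct (HK d (HDQ _ Hd)) as [H|H]; auto.
      specialize (Hlb _ Hd). lra.
Qed.

Lemma incr_le (r : nat -> R) : (forall n, r n < r (S n)) -> forall n m, (n <= m)%nat -> r n <= r m.
Proof.
  intros Hr n m Hnm. induction Hnm. lra. specialize (Hr m). lra.
Qed.

Lemma compact_wf Q : sorgenfrey_compact Q -> well_founded_ge Q.
Proof.
  intros HC [r [HrQ Hr]].
  destruct (cover_mono Q (fun n y => y < r n \/ forall k, r k < y) HC) as [N HN].
  - intros n y [Hy|Hy].
    + exists (r n). split; auto. intros z Hz; left; lra.
    + exists (y+1). split; [lra|]. intros z Hz; right; intro k; specialize (Hy k); lra.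
  - intros n m y Hnm [Hy|Hy]; [left|right; auto]. assert (H := incr_le r Hr n m Hnm). lra.
  - intros x _. destruct (classic (forall k, r k < x)) as [H|H]. exists 0%nat; right; auto.
    apply not_all_ex_not in H. destruct H as [k Hk]. exists (S k). left.
    specialize (Hr k). lra.
  - destruct (HN (r N) (HrQ N)) as [H|H]. lra. specialize (H N). lra.
Qed.

Lemma dcpo_wf_compact Q : subdcpo_ge Q -> well_founded_ge Q -> sorgenfrey_compact Q.
Proof.
  intros Hd Hwf I U Ho Hc.
  set (A := fun x => exists l : list I, forall y, Q y -> x <= y -> exists i, In i l /\ U i y).
  assert (HA : forall x, Q x -> A x).
  { intros x0 Qx0. apply NNPP. intro HnA.
    destruct (wf_max Q (fun x => Q x /\ ~ A x) Hwf) as [b [[Qb nAb] Hbmax]].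
    { intros x [H _]; exact H. } { exists x0; auto. }
    apply nAb. destruct (Hc b Qb) as [i0 Ui0].
    destruct (classic (exists y, Q y /\ b < y)) as [Hex|Hnex].
    - destruct (Ho i0 b Ui0) as [c [Hbc Hc0]].
      assert (Hy : exists y, Q y /\ b < y /\ forall z, Q z -> b < z < y -> U i0 z).
      { destruct (classic (exists y, (Q y /\ b < y) /\ y < c)) as [[y [[Qy Hby] Hyc]]|Hn].
        - exists y. split; auto. split; auto. intros z _ Hz. apply Hc0. lra.
        - destruct (Hd (fun y => Q y /\ b < y)) as [t [[Htlb Htg] Qt]].
          { intros x [H _]; auto. } { exact Hex. }
          assert (c <= t).
          { apply Htg. intros d Hd'. destruct (Rle_dec c d) as [|Hcd]; auto.
            exfalso. apply Hn. exists d. split; auto. lra. }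
          exists t. split; auto. split; [lra|]. intros z Qz Hz.
          assert (t <= z) by (apply Htlb; split; auto; lra). lra. }
      destruct Hy as [y [Qy [Hby Hyz]]].
      assert (Ay : A y).
      { apply NNPP. intro nAy. specialize (Hbmax y (conj Qy nAy)). lra. }
      destruct Ay as [l Hl]. exists (i0 :: l). intros z Qz Hbz.
      destruct (Rlt_dec z y) as [Hzy|Hzy].
      + exists i0. split; [left; auto|].
        destruct (Req_dec z b) as [->|Hzb]; auto. apply Hyz; auto. lra.
      + destruct (Hl z Qz) as [i [Hi Ui]]; [lra|]. exists i. split; [right; auto|auto].
    - exists (i0 :: nil). intros z Qz Hbz. exists i0. split; [left; auto|].
      destruct (Req_dec z b) as [->|Hzb]; auto. exfalso. apply Hnex. exists z. split; auto; lra. }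
  destruct (classic (exists x, Q x)) as [Hex|Hnex].
  - destruct (Hd Q (fun x H => H) Hex) as [m [[Hlb _] Qm]].
    destruct (HA m Qm) as [l Hl]. exists l. intros x Qx. apply Hl; auto.
  - exists nil. intros x Qx. exfalso. apply Hnex. exists x; auto.
Qed.

Definition dec (m : nat) : R :=
  let (a, c) := Cantor.of_nat m in let (b, d) := Cantor.of_nat c in (INR a - INR b) / INR d.

Lemma dec_dense p x : p < x -> exists m, p < dec m < x.
Proof.
  intros Hpx. destruct (archimed_cor1 (x - p)) as [d [Hd1 Hd2]]; [lra|].
  set (k := up (p * INR d)). destruct (archimed (p * INR d)) as [Hk1 Hk2]. fold k in Hk1, Hk2.
  exists (Cantor.to_nat (Z.to_nat k, Cantor.to_nat (Z.to_nat (- k), d))).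
  unfold dec. rewrite !Cantor.cancel_of_to.
  assert (HZ : (Z.of_nat (Z.to_nat k) - Z.of_nat (Z.to_nat (- k)) = k)%Z) by lia.
  rewrite !INR_IZR_INZ, <- minus_IZR, HZ.
  assert (Hdpos : 0 < INR d) by (apply lt_0_INR; lia).
  rewrite <- INR_IZR_INZ.
  split.
  - apply Rmult_lt_reg_r with (INR d); auto. unfold Rdiv. rewrite Rmult_assoc, Rinv_l; lra.
  - apply Rmult_lt_reg_r with (INR d); auto. unfold Rdiv. rewrite Rmult_assoc, Rinv_l by lra.
    assert (/ INR d * INR d = 1) by (apply Rinv_l; lra).
    assert ((x - p) * INR d > / INR d * INR d) by (apply Rmult_lt_compat_r; lra).
    nra.
Qed.

Lemma wf_countable Q : well_founded_ge Q -> countable_set Q.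
Proof.
  intros Hwf.
  set (Pf := fun x n => ((forall y, Q y -> ~ y < x) /\ n = 0%nat) \/
     (exists m, n = S m /\ dec m < x /\ forall y, Q y -> y < x -> y < dec m)).
  exists (fun x => epsilon (inhabits 0%nat) (Pf x)).
  assert (Hs : forall x, Q x -> Pf x (epsilon (inhabits 0%nat) (Pf x))).
  { intros x Qx. apply epsilon_spec.
    destruct (classic (exists y, Q y /\ y < x)) as [Hex|Hnex].
    - destruct (wf_max Q (fun y => Q y /\ y < x) Hwf) as [p [[Qp Hpx] Hp]]; auto.
      { intros y [H _]; auto. }
      destruct (dec_dense p x Hpx) as [m [Hm1 Hm2]].
      exists (S m). right. exists m. split; auto. split; auto.
      intros y Qy Hy. specialize (Hp y (conj Qy Hy)). lra.
    - exists 0%nat. left. split; auto. intros y Qy Hy. apply Hnex; eauto. }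
  intros x x' Qx Qx' Heq.
  assert (H1 := Hs x Qx). assert (H2 := Hs x' Qx'). rewrite Heq in H1.
  set (n := epsilon (inhabits 0%nat) (Pf x')) in *. clearbody n.
  destruct (total_order_T x x') as [[Hlt|Heq']|Hgt]; auto; exfalso.
  - destruct H2 as [[H2 _]|[m [-> [Hm1 Hm2]]]]. apply (H2 x Qx Hlt).
    destruct H1 as [[_ H1]|[m' [Hm' [Hm'1 _]]]]. discriminate.
    injection Hm' as ->. specialize (Hm2 x Qx Hlt). lra.
  - destruct H1 as [[H1 _]|[m [-> [Hm1 Hm2]]]]. apply (H1 x' Qx' Hgt).
    destruct H2 as [[_ H2]|[m' [Hm' [Hm'1 _]]]]. discriminate.
    injection Hm' as ->. specialize (Hm2 x' Qx' Hgt). lra.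
Qed.

Theorem theorem4p15 :
  forall Q : R -> Prop,
    (sorgenfrey_compact Q <-> (subdcpo_ge Q /\ well_founded_ge Q)) /\
    (sorgenfrey_compact Q -> countable_set Q).
Proof.
  intros Q. split; [split|].
  - intros H. split; [apply compact_subdcpo|apply compact_wf]; auto.
  - intros [H1 H2]. apply dcpo_wf_compact; auto.
  - intros H. apply wf_countable, compact_wf; auto.
Qed.
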